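(* Let $\alpha\in\mathbb{N}_0$. For $k\in\mathbb{N}$ let $\Gamma_k^{(\alpha)}$ have density $L_\alpha^{(k-\alpha-1)}(x)^2x^{k-\alpha-1}e^{-x}\mathbf{1}_{x\ge0}$ and let $\Gamma_k$ be gamma-distributed with shape $k$ and rate $1$. Then for all $k\in\mathbb{N}$ and $R>0$ with $k\ge R>2\alpha+2$, \[ \mathbb{P}\bigl[\Gamma_k^{(\alpha)}\le R\bigr]\le3^{2\alpha+1}R^{\alpha+1}\,\mathbb{P}\bigl[\Gamma_{k-2\alpha-2}\le R\bigr], \] and for all $k\in\mathbb{N}$ and $R$ with $1\le k\le R$, \[ \mathbb{P}\bigl[\Gamma_k^{(\alpha)}\ge R\bigr]\le4^\alpha k^\alpha\,\mathbb{P}\bigl[\Gamma_{k+\alpha}\ge R\bigr]. \]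
   Context: For $\beta\ge-\alpha$, $L_\alpha^{(\beta)}$ is the generalized Laguerre polynomial of degree $\alpha$ normalized so that $\int_0^\infty L_\alpha^{(\beta)}(x)^2x^\beta e^{-x}\mathrm{d}x=1$; explicitly $L_\alpha^{(\beta)}(x)=\sqrt{\frac{\alpha!}{\Gamma(\beta+\alpha+1)}}\sum_{\ell=0}^\alpha\binom{\alpha+\beta}{\alpha-\ell}\frac{(-x)^\ell}{\ell!}$ (up to sign). *)

(* Defs.v *)
From HB Require Import structures.
From mathcomp Require Import all_boot all_order all_algebra.
From mathcomp Require Import all_classical all_reals all_analysis.
Set Implicit Arguments. Unset Strict Implicit. Unset Printing Implicit Defensive.
Import Order.TTheory GRing.Theory Num.Theory.
Import numFieldNormedType.Exports.
Local Open Scope classical_set_scope.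
Local Open Scope ring_scope.

(* Normalized generalized Laguerre polynomial L_a^{(b)} for an integer
   parameter b >= -a (the only case needed: b = k - a - 1 with k >= 1).
   For integer b, Gamma(b+a+1) = (a+b)! and binom(a+b, a-l) is the usual
   binomial coefficient of the natural number a+b. *)
Definition laguerre {R : realType} (a : nat) (b : int) (x : R) : R :=
  let n := `|(a%:Z + b)%R|%N in
  Num.sqrt ((a`!)%:R / (n`!)%:R) *
  \sum_(l < a.+1) ('C(n, a - l))%:R * (- x) ^+ l / (l`!)%:R.

Definition dens_lag {R : realType} (a k : nat) (x : R) : R :=
  if 0 <= x then
    (laguerre a (k%:Z - a%:Z - 1) x) ^+ 2 * x ^ (k%:Z - a%:Z - 1) * expR (- x)
  else 0.

Definition dens_gamma {R : realType} (k : nat) (x : R) : R :=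
  if 0 <= x then x ^+ k.-1 * expR (- x) / ((k.-1)`!)%:R else 0.

Definition prob_le {R : realType} (f : R -> R) (r : R) : \bar R :=
  (\int[@lebesgue_measure R]_(x in `]-oo, r]) (f x)%:E)%E.
Definition prob_ge {R : realType} (f : R -> R) (r : R) : \bar R :=
  (\int[@lebesgue_measure R]_(x in `[r, +oo[) (f x)%:E)%E.

(* Main.v *)
Require Import Defs.
From HB Require Import structures.
From mathcomp Require Import all_boot all_order all_algebra.
From mathcomp Require Import all_classical all_reals all_analysis.
From mathcomp Require Import zify ring lra.
From mathcomp Require Import measurable_realfun.
Import Order.TTheory GRing.Theory Num.Theory.
Local Open Scope ring_scope.

Section Helpers.

Lemma ffact_le_exp n j : (n ^_ j <= n ^ j)%N.
Proof.
elim: j n => [|j IH] n; first by rewrite ffactn0 expn0.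
rewrite ffactnS expnS leq_mul2l; apply/orP; right.
apply: leq_trans (IH _) _.
by case: (j) => [|j']; rewrite ?expn0 // leq_exp2r //; lia.
Qed.

Lemma binfact_le n j : ('C(n, j) * j`! <= n ^ j)%N.
Proof. by rewrite bin_ffact ffact_le_exp. Qed.

Lemma P_le k a : (0 < k)%N -> ((k + a).-1`! <= k ^ a * a`! * (k.-1)`!)%N.
Proof.
move=> hk; elim: a => [|a IH]; first by rewrite addn0 expn0 fact0 !mul1n.
have -> : ((k + a.+1).-1 = (k + a).-1.+1)%N by lia.
rewrite factS expnS factS.
have -> : ((k + a).-1.+1 = k + a)%N by lia.
have h1 : (k + a <= k * a.+1)%N by nia.
have -> : (k * k ^ a * (a.+1 * a`!) * (k.-1)`! = (k * a.+1) * (k ^ a * a`! * (k.-1)`!))%N by ring.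
exact: leq_mul.
Qed.

Lemma lag_n k a : (0 < k)%N -> (`|(a%:Z + (k%:Z - a%:Z - 1))%R|%N = k.-1)%N.
Proof.
move=> hk; have -> : (a%:Z + (k%:Z - a%:Z - 1))%R = (k.-1)%:Z by lia.
by rewrite absz_nat.
Qed.

Lemma Sbound (R : realType) (n a : nat) (x y : R) : n%:R <= y -> `|x| <= y ->
  `|\sum_(l < a.+1) ('C(n, a - l))%:R * (- x) ^+ l / (l`!)%:R|
    <= y ^+ a * 2 ^+ a / (a`!)%:R.
Proof.
move=> hny hxy.
have y0 : 0 <= y by apply: le_trans hxy.
apply: le_trans (ler_norm_sum _ _ _) _.
have step : forall l : 'I_a.+1,
   `|('C(n, a - l))%:R * (- x) ^+ l / (l`!)%:R|
     <= (y ^+ a / (a`!)%:R) * ('C(a, l))%:R.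
  move=> [l hl] /=.
  have hla : (l <= a)%N by lia.
  set j := (a - l)%N.
  have fj : (0 : R) < (j`!)%:R by rewrite ltr0n fact_gt0.
  have fl : (0 : R) < (l`!)%:R by rewrite ltr0n fact_gt0.
  have H1 : ('C(n, j))%:R * (j`!)%:R <= y ^+ j :> R.
    rewrite -natrM; apply: le_trans (_ : (n ^ j)%:R <= _).
      by rewrite ler_nat binfact_le.
    by rewrite natrX; apply: lerXn2r; rewrite ?nnegrE ?ler0n.
  have H2 : `|x| ^+ l <= y ^+ l.
    by apply: lerXn2r; rewrite ?nnegrE ?normr_ge0.
  have H3 : ('C(a, l))%:R * ((l`!)%:R * (j`!)%:R) = (a`!)%:R :> R.
    by rewrite -!natrM bin_fact.
  have H4 : y ^+ a = y ^+ j * y ^+ l by rewrite -exprD /j subnK.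
  have eR : y ^+ a / (a`!)%:R * ('C(a, l))%:R
       = (y ^+ j * y ^+ l) / ((l`!)%:R * (j`!)%:R).
    rewrite H4 -H3; field.
    by rewrite !pnatr_eq0 -!lt0n !fact_gt0 bin_gt0 hla.
  rewrite eR normrM normrM normrX normrN normr_nat normfV normr_nat.
  have eL : ('C(n, j))%:R * `|x| ^+ l / (l`!)%:R
       = (('C(n, j))%:R * (j`!)%:R * `|x| ^+ l) / ((l`!)%:R * (j`!)%:R) :> R.
    by field; rewrite !pnatr_eq0 -!lt0n !fact_gt0.
  rewrite eL ler_pM2r ?invr_gt0 ?mulr_gt0 //.
  by apply: ler_pM; rewrite ?mulr_ge0 ?ler0n ?exprn_ge0 ?normr_ge0.
apply: le_trans (ler_sum _ (fun l _ => step l)) _.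
rewrite -mulr_sumr.
have -> : \sum_(i < a.+1) ('C(a, i))%:R = (2 : R) ^+ a.
  have e := exprD1n (1 : R) a.
  have e2 : (1 : R) + 1 = 2 by lra.
  rewrite e2 in e; rewrite e; apply: eq_bigr => i _; by rewrite expr1n.
by rewrite mulrAC.
Qed.

Lemma lag_sq_bound (R : realType) a k (x y : R) : (0 < k)%N ->
  (k.-1)%:R <= y -> `|x| <= y ->
  laguerre a (k%:Z - a%:Z - 1) x ^+ 2
    <= 4 ^+ a * y ^+ (2 * a) / ((k.-1)`!%:R * (a`!)%:R).
Proof.
move=> hk hy hx.
rewrite /laguerre; cbv zeta; rewrite lag_n //.
set S := \sum_(l < a.+1) _.
have hS := @Sbound R (k.-1) a x y hy hx; rewrite -/S in hS.
have fa : (0 : R) < (a`!)%:R by rewrite ltr0n fact_gt0.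
have fk : (0 : R) < ((k.-1)`!)%:R by rewrite ltr0n fact_gt0.
rewrite exprMn sqr_sqrtr ?divr_ge0 ?ler0n //.
have hS2 : S ^+ 2 <= (y ^+ a * 2 ^+ a / (a`!)%:R) ^+ 2.
  rewrite -real_normK ?num_real //.
  apply: lerXn2r; rewrite ?nnegrE ?normr_ge0 //.
  apply: le_trans hS; exact: normr_ge0.
apply: le_trans (ler_wpM2l _ hS2) _; first by rewrite divr_ge0 ?ler0n.
rewrite le_eqVlt; apply/orP; left; apply/eqP.
have -> : (4 : R) ^+ a = 2 ^+ a * 2 ^+ a by rewrite -exprMn; congr (_ ^+ _); lra.
rewrite mulnC exprM.
field.
by rewrite !pnatr_eq0 -!lt0n !fact_gt0.
Qed.


Lemma bern (k n : nat) : (k.+1 ^ n * (k - n) <= k ^ n.+1)%N.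
Proof.
elim: n => [|n IH]; first by rewrite expn0 expn1 mul1n subn0.
case: (leqP k n) => hkn.
  have -> : (k - n.+1 = 0)%N by lia.
  by rewrite muln0.
have hd : (0 < k - n)%N by lia.
rewrite -(leq_pmul2l hd).
have e1 : (k.+1 ^ n.+1 = k.+1 * k.+1 ^ n)%N by rewrite expnS.
have e2 : (k ^ n.+2 = k * k ^ n.+1)%N by rewrite expnS.
rewrite e1 e2.
move: IH; set X := (k.+1 ^ n)%N; set Y := (k ^ n.+1)%N => IH.
have h3 : ((k - n) * (k.+1 * X * (k - n.+1)) = (k.+1 * (k - n.+1)) * (X * (k - n)))%N by ring.
rewrite h3.
apply: (leq_trans (leq_mul (leqnn _) IH)).
have : (k.+1 * (k - n.+1) <= (k - n) * k)%N by nia.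
move=> h; rewrite mulnA; exact: leq_mul h (leqnn _).
Qed.

Definition Q (a k : nat) := (4 ^ a * k ^ (2 * a + 1) * (k - (2 * a + 3))`!
   <= 3 ^ (2 * a + 1) * a`! * (k.-1)`!)%N.

Lemma Q_step a k : (2 * a + 3 <= k)%N -> Q a k -> Q a k.+1.
Proof.
rewrite /Q => hk IH.
have hb := bern k (2 * a + 1).
have ef : ((k.+1 - (2 * a + 3))`! = (k - (2 * a + 2)) * (k - (2 * a + 3))`!)%N.
  have -> : (k.+1 - (2 * a + 3) = (k - (2 * a + 3)).+1)%N by lia.
  rewrite factS; congr (_ * _)%N; lia.
have ek : ((k.+1).-1`! = k * (k.-1)`!)%N.
  case: k hk {IH hb ef} => [|k] hk; first by lia.
  by rewrite /= factS.
rewrite ef ek.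
have e3 : (k ^ (2 * a + 1).+1 = k * k ^ (2 * a + 1))%N by rewrite expnS.
rewrite e3 in hb.
move: IH hb.
set F := ((k - (2 * a + 3))`!)%N.
set P := (k.+1 ^ (2 * a + 1))%N.
set K := (k ^ (2 * a + 1))%N.
set A := (4 ^ a)%N.
set B := (3 ^ (2 * a + 1) * a`!)%N.
set G := ((k.-1)`!)%N.
move=> IH hb.
have hle : (P * (k - (2 * a + 2)) <= k * K)%N.
  apply: leq_trans hb; apply: leq_mul => //; lia.
have -> : (A * P * ((k - (2 * a + 2)) * F) = A * F * (P * (k - (2 * a + 2))))%N by ring.
apply: (leq_trans (leq_mul (leqnn _) hle)).
have -> : (A * F * (k * K) = k * (A * K * F))%N by ring.
have -> : (B * (k * G) = k * (B * G))%N by ring.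
by rewrite leq_mul2l IH orbT.
Qed.
Lemma expR2_le9 (R : realType) : expR (2 : R) <= 9.
Proof.
have h1 : 1 + (- (1/6)) <= expR (- (1/6) : R) := expR_ge1Dx _.
have h0 : expR (1/6 : R) * expR (- (1/6)) = 1 by rewrite -expRD subrr expR0.
have hp : 0 < expR (1/6 : R) := expR_gt0 _.
have h2 : expR (1/6 : R) <= 6/5 by nra.
have -> : (2 : R) = 12%:R * (1/6) by lra.
rewrite expRM_natl.
apply: (le_trans (lerXn2r 12 _ _ h2)); rewrite ?nnegrE; try lra.
Qed.

Lemma E2 (R : realType) (m : nat) : (0 < m)%N -> ((m + 2) ^ m <= 9 * m ^ m)%N.
Proof.
move=> hm.
rewrite -(ler_nat R) natrM !natrX natrD.
have hm' : (0 : R) < m%:R by rewrite ltr0n.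
have e : (m%:R + 2%:R : R) = m%:R * (1 + 2 / m%:R).
  by field; rewrite gt_eqF.
rewrite e exprMn mulrC ler_pM2r ?exprn_gt0 //.
have h1 : 1 + 2 / m%:R <= expR (2 / m%:R : R) := expR_ge1Dx _.
apply: (le_trans (lerXn2r m _ _ h1)); rewrite ?nnegrE.
- have : 0 <= 2 / m%:R :> R by apply: divr_ge0.
  lra.
- exact: ltW (expR_gt0 _).
rewrite -expRM_natl mulrC divfK ?gt_eqF //.
exact: expR2_le9.
Qed.

Lemma Qbase_iff a : Q a (2 * a + 3) <->
  (4 ^ a * (2 * a + 3) ^ (2 * a + 1) <= 3 ^ (2 * a + 1) * a`! * (2 * a + 2)`!)%N.
Proof.
rewrite /Q subnn fact0 muln1.
by have -> : ((2 * a + 3).-1 = 2 * a + 2)%N by lia.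
Qed.

Lemma Qbase (R : realType) a : Q a (2 * a + 3).
Proof.
elim: a => [|a IH]; first by rewrite Qbase_iff.
case: (leqP a 2) => ha.
  case: a ha {IH} => [|[|[|a]]] ha; last by exfalso; move: ha.
  all: rewrite Qbase_iff.
  - have -> : (2 * 1 + 2 = 4)%N by []. by rewrite !factS fact0; lia.
  - have -> : (2 * 2 + 2 = 6)%N by []. by rewrite !factS fact0; lia.
  - have -> : (2 * 3 + 2 = 8)%N by []. by rewrite !factS fact0; lia.
move: IH; rewrite !Qbase_iff => IH.
set m := (2 * a + 3)%N.
have hm0 : (0 < m)%N by rewrite /m; lia.
have hE := @E2 R m hm0.
have e1 : (2 * a.+1 + 3 = m + 2)%N by rewrite /m; lia.
have e2 : (2 * a.+1 + 1 = m)%N by rewrite /m; lia.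
have e3 : ((2 * a.+1 + 2)`! = (m + 1) * m * (2 * a + 2)`!)%N.
  have -> : (2 * a.+1 + 2 = (2 * a + 2).+2)%N by lia.
  rewrite !factS /m; lia.
have e4 : (m ^ m = m * m * m ^ (2 * a + 1))%N.
  by rewrite -mulnA -!expnS /m; congr (_ ^ _)%N; lia.
have e5 : (3 ^ (2 * a.+1 + 1) = 9 * 3 ^ (2 * a + 1))%N.
  have -> : (2 * a.+1 + 1 = (2 * a + 1).+2)%N by lia.
  by rewrite !expnS mulnA.
rewrite e5 e1 e2 e3 factS expnS.
rewrite e4 in hE.
move: IH hE.
set X := (m ^ (2 * a + 1))%N.
set Y := ((m + 2) ^ m)%N.
set A := (4 ^ a)%N.
set T := (3 ^ (2 * a + 1))%N.
set F := (a`!)%N.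
set G := ((2 * a + 2)`!)%N.
move=> IH hE.
have hm : (4 * m <= a.+1 * (m + 1))%N by rewrite /m; nia.
have s1 : (4 * A * Y <= 4 * A * (9 * (m * m * X)))%N by rewrite leq_mul2l hE orbT.
apply: (leq_trans s1).
have -> : (4 * A * (9 * (m * m * X)) = 9 * (4 * m) * m * (A * X))%N by ring.
have -> : (9 * T * (a.+1 * F) * ((m + 1) * m * G) = 9 * (a.+1 * (m + 1)) * m * (T * F * G))%N by ring.
apply: leq_mul; last exact: IH.
by apply: leq_mul => //; apply: leq_mul.
Qed.

Lemma Qall (R : realType) a k : (2 * a + 3 <= k)%N -> Q a k.
Proof.
move=> hk; rewrite -(subnK hk).
elim: (k - (2 * a + 3))%N => [|n IH]; first by rewrite add0n; exact: Qbase R a.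
rewrite addSn; apply: Q_step => //; lia.
Qed.


Lemma pw1 (R : realType) a k (r x : R) : (2 * a + 3 <= k)%N -> r <= k%:R ->
  x <= r ->
  dens_lag a k x <= (3 ^+ (2 * a + 1) * r ^+ (a + 1)) * dens_gamma (k - (2 * a + 2)) x.
Proof.
move=> hk hrk hxr.
rewrite /dens_lag /dens_gamma.
case: (boolP (0 <= x)) => hx0; last by rewrite mulr0.
have r0 : 0 <= r by apply: le_trans hxr.
have ez : (k%:Z - a%:Z - 1) = ((a + 2) + (k - (2 * a + 3)))%N%:Z by lia.
have ez2 : x ^ (k%:Z - a%:Z - 1)
    = x ^+ (a + 2) * x ^+ (k - (2 * a + 3)) by rewrite ez -exprD.
rewrite ez2.
have eN : ((k - (2 * a + 2)).-1 = k - (2 * a + 3))%N by lia.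
rewrite eN.
set N := (k - (2 * a + 3))%N.
set W := x ^+ N * expR (- x).
have W0 : 0 <= W by rewrite mulr_ge0 ?exprn_ge0 // ltW // expR_gt0.
have hk' : (0 < k)%N by lia.
have hkx : (k.-1)%:R <= k%:R :> R by rewrite ler_nat leq_pred.
have hxk : `|x| <= k%:R by rewrite ger0_norm //; apply: le_trans hrk.
have hL := @lag_sq_bound R a k x (k%:R) hk' hkx hxk.
set L2 := laguerre _ _ _ ^+ 2 in hL *.
have L20 : 0 <= L2 by rewrite /L2 sqr_ge0.
set A := 4 ^+ a * _ / _ in hL.
have hp : x ^+ (a + 2) <= r ^+ (a + 1) * k%:R.
  rewrite addnS exprSr; apply: ler_pM => //; rewrite ?exprn_ge0 //.
  - by rewrite lerXn2r ?nnegrE.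
  - exact: le_trans hrk.
have -> : L2 * (x ^+ (a + 2) * x ^+ N) * expR (- x) = L2 * x ^+ (a + 2) * W.
  by rewrite /W; ring.
apply: (le_trans (_ : _ <= A * (r ^+ (a + 1) * k%:R) * W)).
  apply: ler_wpM2r => //; apply: ler_pM => //; by rewrite exprn_ge0.
have -> : 3 ^+ (2 * a + 1) * r ^+ (a + 1) * (W / (N`!)%:R)
    = (3 ^+ (2 * a + 1) / (N`!)%:R) * (r ^+ (a + 1) * W) by ring.
have -> : A * (r ^+ (a + 1) * k%:R) * W = (A * k%:R) * (r ^+ (a + 1) * W) by ring.
apply: ler_wpM2r; first by rewrite mulr_ge0 ?exprn_ge0.
have hQ := @Qall R a k hk; rewrite /Q -/N in hQ.
move: hQ; rewrite -(ler_nat R) !natrM !natrX => hQ.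
have fN : (0 : R) < (N`!)%:R by rewrite ltr0n fact_gt0.
have fk : (0 : R) < ((k.-1)`!)%:R by rewrite ltr0n fact_gt0.
have fa : (0 : R) < (a`!)%:R by rewrite ltr0n fact_gt0.
rewrite /A ler_pdivlMr //.
have -> : 4 ^+ a * k%:R ^+ (2 * a) / (((k.-1)`!)%:R * (a`!)%:R) * k%:R * (N`!)%:R
   = (4 ^+ a * (k%:R ^+ (2 * a) * k%:R) * (N`!)%:R) / (((k.-1)`!)%:R * (a`!)%:R) :> R.
  by ring.
rewrite ler_pdivrMr ?mulr_gt0 //.
have e : k%:R ^+ (2 * a + 1) = (k%:R : R) ^+ (2 * a) * k%:R by rewrite addn1 exprSr.
rewrite e in hQ.
apply: le_trans (_ : 3 ^+ (2 * a + 1) * (a`!)%:R * ((k.-1)`!)%:R <= _).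
  by apply: le_trans hQ; rewrite le_eqVlt; apply/orP; left; apply/eqP; ring.
rewrite le_eqVlt; apply/orP; left; apply/eqP; ring.
Qed.

Lemma pw2 (R : realType) a k (r x : R) : (1 <= k)%N -> k%:R <= r -> r <= x ->
  dens_lag a k x <= (4 ^+ a * k%:R ^+ a) * dens_gamma (k + a) x.
Proof.
move=> hk hkr hrx.
have hkx : k%:R <= x by apply: le_trans hrx.
have x1 : 1 <= x by apply: le_trans hkx; rewrite ler1n.
have x0 : 0 < x by apply: lt_le_trans x1.
rewrite /dens_lag /dens_gamma (ltW x0).
set z := (k%:Z - a%:Z - 1).
have xz0 : 0 < x ^ z by rewrite exprz_gt0.
have ez : x ^+ (2 * a) * x ^ z = x ^+ (k + a).-1.
  have -> : x ^+ (2 * a) = x ^ ((2 * a)%N%:Z) by [].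
  rewrite -expfzDr ?gt_eqF //.
  have -> : ((2 * a)%N%:Z + z) = ((k + a).-1)%N%:Z by rewrite /z; lia.
  by [].
have hk1 : (k.-1)%:R <= x by apply: le_trans hkx; rewrite ler_nat leq_pred.
have hxx : `|x| <= x by rewrite ger0_norm // ltW.
have hL := @lag_sq_bound R a k x x hk hk1 hxx.
set L2 := laguerre _ _ _ ^+ 2 in hL *.
set E := expR (- x).
have E0 : 0 < E by rewrite /E expR_gt0.
set A := 4 ^+ a * _ / _ in hL.
apply: (le_trans (_ : _ <= A * x ^ z * E)).
  by apply: ler_wpM2r; [exact: ltW | apply: ler_wpM2r => //; exact: ltW].
have fk : (0 : R) < ((k.-1)`!)%:R by rewrite ltr0n fact_gt0.
have fa : (0 : R) < (a`!)%:R by rewrite ltr0n fact_gt0.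
have fN : (0 : R) < (((k + a).-1)`!)%:R by rewrite ltr0n fact_gt0.
have -> : A * x ^ z * E = (4 ^+ a / (((k.-1)`!)%:R * (a`!)%:R)) * (x ^+ (k + a).-1 * E).
  by rewrite -ez /A; ring.
have -> : 4 ^+ a * k%:R ^+ a * (x ^+ (k + a).-1 * E / (((k + a).-1)`!)%:R)
   = (4 ^+ a * k%:R ^+ a / (((k + a).-1)`!)%:R) * (x ^+ (k + a).-1 * E) by ring.
apply: ler_wpM2r; first by rewrite mulr_ge0 ?exprn_ge0 ?ltW.
have hP := @P_le k a hk.
move: hP; rewrite -(ler_nat R) !natrM natrX => hP.
rewrite ler_pdivrMr ?mulr_gt0 // mulrAC ler_pdivlMr //.
have h4 : (0 : R) <= 4 ^+ a by rewrite exprn_ge0.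
apply: le_trans (_ : 4 ^+ a * (k%:R ^+ a * (a`!)%:R * ((k.-1)`!)%:R) <= _).
  by apply: ler_wpM2l.
by rewrite le_eqVlt; apply/orP; left; apply/eqP; ring.
Qed.

Local Open Scope classical_set_scope.

Lemma measurable_inv (R : realType) : measurable_fun [set: R] (@GRing.inv R).
Proof.
rewrite -(setvU [set (0 : R)]).
apply/measurable_funU; first exact: measurableC (measurable_set1 _).
  exact: measurable_set1.
split; last exact: measurable_fun_set1.
apply: measurable_realfun.open_continuous_measurable_fun.
  apply: closed_openC.
  exact/accessible_closed_set1/hausdorff_accessible/Rhausdorff.
move=> x; rewrite inE => hx; apply: inv_continuous; exact/eqP.
Qed.

Lemma measurable_exprz (R : realType) (z : int) :
  measurable_fun [set: R] (fun x => x ^ z).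
Proof.
case: z => n.
  exact: measurable_realfun.exprn_measurable.
apply: (measurableT_comp (measurable_inv R)).
exact: measurable_realfun.exprn_measurable.
Qed.

Lemma measurable_lag (R : realType) a b :
  measurable_fun [set: R] (laguerre a b).
Proof.
rewrite /laguerre; cbv zeta.
apply: measurable_realfun.measurable_funM; first exact: measurable_cst.
apply: measurable_sum => l.
apply: measurable_realfun.measurable_funM; last exact: measurable_cst.
apply: measurable_realfun.measurable_funM; first exact: measurable_cst.
apply: measurable_realfun.measurable_funX.
apply: measurable_realfun.measurable_funN.
exact: measurable_id.
Qed.

Lemma measurable_dens_lag (R : realType) a k :
  measurable_fun [set: R] (dens_lag a k).
Proof.
rewrite /dens_lag.
apply: measurable_fun_ifT.
- exact: (measurable_realfun.measurable_fun_ler (measurable_cst (0 : R)) (@measurable_id _ _ setT)).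
- apply: measurable_realfun.measurable_funM.
    apply: measurable_realfun.measurable_funM.
      apply: measurable_realfun.measurable_funX; exact: measurable_lag.
    exact: measurable_exprz.
  apply: (measurableT_comp (@measurable_realfun.measurable_expR R)).
  apply: measurable_realfun.measurable_funN; exact: measurable_id.
- exact: measurable_cst.
Qed.

Lemma measurable_dens_gamma (R : realType) m :
  measurable_fun [set: R] (dens_gamma m).
Proof.
rewrite /dens_gamma.
apply: measurable_fun_ifT.
- exact: (measurable_realfun.measurable_fun_ler (measurable_cst (0 : R)) (@measurable_id _ _ setT)).
- apply: measurable_realfun.measurable_funM; last exact: measurable_cst.
  apply: measurable_realfun.measurable_funM.
    apply: measurable_realfun.measurable_funX; exact: measurable_id.
  apply: (measurableT_comp (@measurable_realfun.measurable_expR R)).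
  apply: measurable_realfun.measurable_funN; exact: measurable_id.
- exact: measurable_cst.
Qed.

Lemma dens_lag_ge0 (R : realType) a k (x : R) : 0 <= dens_lag a k x.
Proof.
rewrite /dens_lag; case: ifP => // hx.
apply: mulr_ge0; last exact: ltW (expR_gt0 _).
apply: mulr_ge0; first exact: sqr_ge0.
by apply: exprz_ge0; rewrite hx.
Qed.

Lemma dens_gamma_ge0 (R : realType) m (x : R) : 0 <= dens_gamma m x.
Proof.
rewrite /dens_gamma; case: ifP => // hx.
apply: mulr_ge0; last by rewrite invr_ge0 ler0n.
apply: mulr_ge0; last exact: ltW (expR_gt0 _).
by apply: exprn_ge0; rewrite hx.
Qed.

Lemma int_le (R : realType) (D : set R) (mD : measurable D) (f g : R -> R) (c : R) :
  0 <= c -> measurable_fun setT f -> measurable_fun setT g ->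
  (forall x, 0 <= f x) -> (forall x, 0 <= g x) ->
  (forall x, D x -> f x <= c * g x) ->
  (\int[@lebesgue_measure R]_(x in D) (f x)%:E
     <= c%:E * \int[@lebesgue_measure R]_(x in D) (g x)%:E)%E.
Proof.
move=> c0 mf mg f0 g0 hfg.
have mgE : measurable_fun D (EFin \o g).
  apply/measurable_EFinP; exact: measurable_funTS.
have mfE : measurable_fun D (EFin \o f).
  apply/measurable_EFinP; exact: measurable_funTS.
have g0E : forall x, D x -> (0 <= (g x)%:E)%E by move=> x _; rewrite lee_fin.
have c0E : (0 <= c%:E)%E by rewrite lee_fin.
have hZ := ge0_integralZl (@lebesgue_measure R) mD mgE g0E c0E.
move: hZ; rewrite /comp => <-.
apply: ge0_le_integral.
all: try (by move=> x _; rewrite lee_fin).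
all: try exact: mD.
all: try exact: mfE.
all: try (by move=> x Dx; rewrite -EFinM lee_fin hfg).
apply: emeasurable_funM; [exact: measurable_cst | exact: mgE].
Qed.

End Helpers.


Theorem lemma4p4 (R : realType) (a : nat) :
  (forall (k : nat) (r : R), (0 < k)%N -> (2 * a + 2)%:R < r -> r <= k%:R ->
     (prob_le (dens_lag a k) r
      <= (3 ^+ (2 * a + 1) * r ^+ (a + 1))%:E
         * prob_le (dens_gamma (k - (2 * a + 2))) r)%E) /\
  (forall (k : nat) (r : R), (1 <= k)%N -> k%:R <= r ->
     (prob_ge (dens_lag a k) r
      <= (4 ^+ a * k%:R ^+ a)%:E * prob_ge (dens_gamma (k + a)) r)%E).
Proof.
split.
- move=> k r hk hr hrk.
  have hk3 : (2 * a + 3 <= k)%N.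
    have : ((2 * a + 2)%:R < k%:R :> R) by apply: lt_le_trans hrk.
    rewrite ltr_nat => h; lia.
  have r0 : 0 <= r by apply: le_trans (ltW hr).
  rewrite /prob_le; apply: int_le.
  + exact: measurable_itv.
  + by rewrite mulr_ge0 ?exprn_ge0.
  + exact: measurable_dens_lag.
  + exact: measurable_dens_gamma.
  + exact: dens_lag_ge0.
  + exact: dens_gamma_ge0.
  + move=> x; rewrite /= in_itv /= => hx.
    exact: pw1.
- move=> k r hk hkr.
  rewrite /prob_ge; apply: int_le.
  + exact: measurable_itv.
  + by rewrite mulr_ge0 ?exprn_ge0 ?ler0n.
  + exact: measurable_dens_lag.
  + exact: measurable_dens_gamma.
  + exact: dens_lag_ge0.
  + exact: dens_gamma_ge0.
  + move=> x; rewrite /= in_itv /= andbT => hx.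
    exact: pw2 hk hkr hx.
Qed.
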